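(* Let $(G,\cdot)$ be a group of nilpotence class (at most) two. For $\psi\in\operatorname{End}(G)$ define $g\circ_\psi h=g\cdot\psi(g)\cdot h\cdot\psi(g)^{-1}$. Then $(\circ_\psi:\psi\in\operatorname{End}(G))$ is a brace block on $G$.
   Context: A skew brace is a triple $(G,\cdot,\circ)$ where $(G,\cdot)$ and $(G,\circ)$ are groups and $g\circ(h\cdot k)=(g\circ h)\cdot g^{-1}\cdot(g\circ k)$ for all $g,h,k$. A bi-skew brace is a triple $(G,\cdot,\circ)$ such that both $(G,\cdot,\circ)$ and $(G,\circ,\cdot)$ are skew braces. A brace block on a set $G$ is a family $\mathcal{F}$ of group operations on $G$ such that $(G,\circ,\diamond)$ is a bi-skew brace for all $\circ,\diamond\in\mathcal{F}$. *)

(* Defs.v *)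
Set Implicit Arguments.

Record group := Group {
  carrier :> Type;
  mul : carrier -> carrier -> carrier;
  one : carrier;
  inv : carrier -> carrier;
  mulA : forall x y z, mul x (mul y z) = mul (mul x y) z;
  mul1g : forall x, mul one x = x;
  mulg1 : forall x, mul x one = x;
  mulVg : forall x, mul (inv x) x = one;
  mulgV : forall x, mul x (inv x) = one
}.

Definition commg (G : group) (x y : G) : G :=
  mul G (mul G (inv G x) (inv G y)) (mul G x y).

Definition nil_class_le2 (G : group) : Prop :=
  forall x y z : G, mul G (@commg G x y) z = mul G z (@commg G x y).

Definition is_endo (G : group) (psi : G -> G) : Prop :=
  forall x y : G, psi (mul G x y) = mul G (psi x) (psi y).

Definition circ (G : group) (psi : G -> G) (g h : G) : G :=
  mul G (mul G (mul G g (psi g)) h) (inv G (psi g)).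

Definition is_group_op (T : Type) (op : T -> T -> T) : Prop :=
  (forall x y z, op x (op y z) = op (op x y) z) /\
  exists e : T, (forall x, op e x = x /\ op x e = x) /\
                (forall x, exists y, op x y = e /\ op y x = e).

Definition is_inv_of (T : Type) (op : T -> T -> T) (g gi : T) : Prop :=
  forall x, op (op g gi) x = x /\ op x (op g gi) = x.

Definition skew_brace (T : Type) (dot circ : T -> T -> T) : Prop :=
  is_group_op dot /\ is_group_op circ /\
  forall g h k gi : T, is_inv_of dot g gi ->
    circ g (dot h k) = dot (dot (circ g h) gi) (circ g k).

Definition bi_skew_brace (T : Type) (dot circ : T -> T -> T) : Prop :=
  skew_brace dot circ /\ skew_brace circ dot.

Definition brace_block (T : Type) (I : Type) (F : I -> (T -> T -> T)) : Prop :=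
  (forall i, is_group_op (F i)) /\
  (forall i j, bi_skew_brace (F i) (F j)).

(* Main.v *)
Require Import Defs.
Set Implicit Arguments.
Local Notation "x ** y" := (mul _ x y) (at level 40, left associativity).
Local Notation "x ^-1" := (inv _ x) (at level 3).
Local Notation e := (one _).
Local Notation cm := (@commg _).

Lemma mulKg {G : group} (x y : G) : x^-1 ** (x ** y) = y.
Proof. rewrite mulA, mulVg, mul1g; reflexivity. Qed.
Lemma mulKVg {G : group} (x y : G) : x ** (x^-1 ** y) = y.
Proof. rewrite mulA, mulgV, mul1g; reflexivity. Qed.
Lemma mulgK {G : group} (x y : G) : y ** x ** x^-1 = y.
Proof. rewrite <- mulA, mulgV, mulg1; reflexivity. Qed.
Lemma mulgKV {G : group} (x y : G) : y ** x^-1 ** x = y.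
Proof. rewrite <- mulA, mulVg, mulg1; reflexivity. Qed.
Lemma mulIl {G : group} (x y z : G) : x ** y = x ** z -> y = z.
Proof. intro H. rewrite <- (mulKg x y), H, mulKg. reflexivity. Qed.
Lemma mulIr {G : group} (x y z : G) : y ** x = z ** x -> y = z.
Proof. intro H. rewrite <- (mulgK x y), H, mulgK. reflexivity. Qed.
Lemma inv_uniq {G : group} (x y : G) : x ** y = e -> y = x^-1.
Proof. intro H. apply (mulIl x). rewrite H, mulgV. reflexivity. Qed.
Lemma invK {G : group} (x : G) : (x^-1)^-1 = x.
Proof. symmetry. apply inv_uniq. apply mulVg. Qed.
Lemma invM {G : group} (x y : G) : (x ** y)^-1 = y^-1 ** x^-1.
Proof. symmetry. apply inv_uniq. rewrite <- mulA, (mulA _ y), mulgV, mul1g, mulgV. reflexivity. Qed.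
Lemma inv1 {G : group} : (one G)^-1 = one G.
Proof. symmetry. apply inv_uniq. apply mul1g. Qed.

Lemma swap {G : group} (x y : G) : x ** y = y ** x ** cm x y.
Proof. unfold commg. rewrite <- !mulA, mulKVg, mulKVg. reflexivity. Qed.

Lemma cC {G : group} (hG : nil_class_le2 G) (x y z : G) : cm x y ** z = z ** cm x y.
Proof. apply hG. Qed.

Lemma cMl {G : group} (hG : nil_class_le2 G) (x y z : G) : cm (x ** y) z = cm x z ** cm y z.
Proof.
  apply (mulIl (z ** (x ** y))). rewrite <- swap.
  rewrite mulA, <- (mulA _ x y z), (swap y z), !mulA, (swap x z).
  rewrite <- (mulA _ (z ** x)), <- (mulA _ (z ** x)), (cC hG x z y), !mulA. reflexivity.
Qed.

Lemma cMr {G : group} (hG : nil_class_le2 G) (x y z : G) : cm x (y ** z) = cm x y ** cm x z.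
Proof.
  apply (mulIl ((y ** z) ** x)). rewrite <- swap.
  rewrite mulA, (swap x y), <- (mulA _ (y ** x)), (cC hG x y z), mulA, <- (mulA _ y x z), (swap x z), !mulA.
  rewrite <- (mulA _ (y ** z ** x)), (hG x z (cm x y)), !mulA. reflexivity.
Qed.

Lemma c1l {G : group} (y : G) : cm e y = e.
Proof. unfold commg. rewrite inv1, !mul1g, mulVg. reflexivity. Qed.
Lemma c1r {G : group} (y : G) : cm y e = e.
Proof. unfold commg. rewrite inv1, !mulg1, mulVg. reflexivity. Qed.
Lemma cinv {G : group} (x y : G) : (cm x y)^-1 = cm y x.
Proof. unfold commg. rewrite !invM, !invK, <- !mulA. reflexivity. Qed.
Lemma cVl (G : group) (hG : nil_class_le2 G) (x y : G) : cm (x^-1) y = cm y x.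
Proof. rewrite <- (cinv x y). apply inv_uniq. rewrite <- (cMl hG), mulgV, c1l. reflexivity. Qed.
Lemma cVr (G : group) (hG : nil_class_le2 G) (x y : G) : cm x (y^-1) = cm y x.
Proof. rewrite <- (cinv x y). apply inv_uniq. rewrite <- (cMr hG), mulgV, c1r. reflexivity. Qed.
Lemma cCl (G : group) (hG : nil_class_le2 G) (a b y : G) : cm (cm a b) y = e.
Proof.
  apply (mulIl (y ** cm a b)). rewrite <- swap, mulg1. apply (cC hG).
Qed.
Lemma cCr (G : group) (hG : nil_class_le2 G) (a b y : G) : cm y (cm a b) = e.
Proof. rewrite <- cinv, (cCl hG), inv1. reflexivity. Qed.

Lemma endo1 {G : group} (psi : G -> G) : @is_endo G psi -> psi e = e.
Proof. intro H. apply (mulIl (psi e)). rewrite <- H, !mulg1. reflexivity. Qed.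
Lemma endoV {G : group} (psi : G -> G) : @is_endo G psi -> forall x, psi (x^-1) = (psi x)^-1.
Proof. intros H x. apply inv_uniq. rewrite <- H, mulgV. apply endo1; exact H. Qed.
Lemma endoC {G : group} (psi : G -> G) : @is_endo G psi -> forall x y, psi (cm x y) = cm (psi x) (psi y).
Proof. intros H x y. unfold commg. rewrite !H, !(endoV H). reflexivity. Qed.

Lemma pushc_l {G : group} (hG : nil_class_le2 G) (x a b y : G) :
  x ** cm a b ** y = x ** y ** cm a b.
Proof. rewrite <- !mulA, (cC hG). reflexivity. Qed.
Lemma pushc_0 {G : group} (hG : nil_class_le2 G) (a b y : G) :
  cm a b ** y = y ** cm a b.
Proof. apply hG. Qed.
Lemma move_inv {G : group} (x a b y : G) :
  x = y ** cm b a -> x ** cm a b = y.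
Proof. intro H. rewrite H, <- mulA, <- cinv, mulVg, mulg1. reflexivity. Qed.
Lemma cancel_pair {G : group} (x a b : G) : x ** cm b a ** cm a b = x.
Proof. rewrite <- cinv, mulgKV. reflexivity. Qed.
Lemma cancel_pair0 {G : group} (a b : G) : cm b a ** cm a b = e.
Proof. rewrite <- cinv, mulVg. reflexivity. Qed.

Lemma circ_eq {G : group} (hG : nil_class_le2 G) (psi : G -> G) (g h : G) : @circ G psi g h = g ** h ** cm (psi g) h.
Proof.
  unfold circ. rewrite <- (mulA _ g (psi g) h), (swap (psi g) h), !mulA, (pushc_l hG), mulgK.
  reflexivity.
Qed.

Lemma cself {G : group} (a : G) : cm a a = e.
Proof. unfold commg. rewrite <- mulA, (mulA _ (a^-1) a a), mulVg, mul1g, mulVg. reflexivity. Qed.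
Lemma mulr_eq {G : group} (X Y c : G) : X = Y -> X ** c = Y ** c.
Proof. intros ->; reflexivity. Qed.
Lemma lhs1 {G : group} (c Y : G) : e ** c = Y -> c = Y.
Proof. rewrite mul1g. auto. Qed.
Lemma rhs1 {G : group} (c Y : G) : Y = e ** c -> Y = c.
Proof. rewrite mul1g. auto. Qed.

Ltac endo_rw :=
  repeat match goal with
  | H : @is_endo ?G ?p |- _ => progress rewrite ?H, ?(endoV H), ?(endoC H), ?(endo1 H)
  end.

Ltac push1 hG :=
  match goal with
  | |- context [mul ?G (mul ?G ?x (commg _ ?a ?b)) ?y] =>
     lazymatch y with commg _ _ _ => fail | _ => rewrite (pushc_l hG x a b y) end
  | |- context [mul ?G (commg _ ?a ?b) ?y] =>
     lazymatch y with commg _ _ _ => fail | _ => rewrite (pushc_0 hG a b y) end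
  end.

Ltac norm hG :=
  repeat progress (
    rewrite ?(circ_eq hG);
    endo_rw;
    rewrite ?invM, ?invK, ?cinv, ?inv1;
    rewrite ?(cMl hG), ?(cMr hG), ?(cVl hG), ?(cVr hG), ?c1l, ?c1r, ?(cCl hG), ?(cCr hG), ?cself;
    rewrite ?mulA, ?mulgK, ?mulgKV, ?mulgV, ?mulVg, ?mul1g, ?mulg1;
    repeat push1 hG).

Ltac bring_end hG c :=
  repeat match goal with
  | |- context [mul ?G (mul ?G ?x c) ?y] =>
     lazymatch y with c => fail | _ => rewrite (pushc_l hG x _ _ y) end
  | |- context [mul ?G c ?y] =>
     lazymatch y with c => fail | _ => rewrite (pushc_0 hG _ _ y) end
  end.

Ltac occurs c t := match t with context [c] => idtac end.

Ltac phase1 hG :=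
  repeat match goal with
  | |- ?X = ?X => reflexivity
  | |- commg _ ?a ?b = ?Y => apply lhs1
  | |- mul ?G ?X (commg ?G ?a ?b) = ?Y =>
      first [ occurs (commg G a b) Y; bring_end hG (commg G a b); apply mulr_eq
            | apply move_inv ]
  end.

Ltac phase2 hG :=
  repeat match goal with
  | |- ?X = ?X => reflexivity
  | |- ?Y = commg _ ?a ?b => apply rhs1
  | |- ?X = mul ?G ?Y (commg ?G ?a ?b) =>
      bring_end hG (commg G b a); rewrite ?cancel_pair, ?cancel_pair0
  end.

Ltac solve_grp hG := norm hG; phase1 hG; phase2 hG.

Lemma test_assoc {G : group} (hG : nil_class_le2 G) (psi : G -> G) (Hp : @is_endo G psi) (g h k : G) :
  @circ G psi (@circ G psi g h) k = @circ G psi g (@circ G psi h k).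
Proof. solve_grp hG. Qed.

Lemma circ_group {G : group} (hG : nil_class_le2 G) (psi : G -> G) (Hp : @is_endo G psi) :
  is_group_op (@circ G psi).
Proof.
  split.
  - intros x y z. symmetry. solve_grp hG.
  - exists (one G). split.
    + intro x. split; solve_grp hG.
    + intro g. exists (g^-1 ** cm (psi g) g). split; solve_grp hG.
Qed.

Lemma inv_form {G : group} (hG : nil_class_le2 G) (psi : G -> G) (g gi : G) :
  @circ G psi g gi = e -> gi = g^-1 ** cm (psi g) g.
Proof.
  intro H. rewrite (circ_eq hG) in H.
  assert (H1 : gi = g^-1 ** (cm (psi g) gi)^-1).
  { apply (mulIl g). rewrite mulKVg. apply (mulIr (cm (psi g) gi)). rewrite mulVg. exact H. }
  assert (H2 : cm (psi g) gi = cm g (psi g)).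
  { transitivity (cm (psi g) (g^-1 ** (cm (psi g) gi)^-1)). { congruence. } rewrite (cMr hG), (cVr hG), cinv, (cCr hG), mulg1. reflexivity. }
  rewrite H2, cinv in H1. exact H1.
Qed.

Lemma circ_skew {G : group} (hG : nil_class_le2 G) (psi phi : G -> G)
  (Hp : @is_endo G psi) (Hf : @is_endo G phi) : skew_brace (@circ G psi) (@circ G phi).
Proof.
  split; [apply circ_group; auto | split; [apply circ_group; auto |]].
  intros g h k gi Hi.
  assert (E : @circ G psi g gi = e).
  { destruct (Hi e) as [Ha _]. rewrite (circ_eq hG psi (@circ G psi g gi) e), c1r, !mulg1 in Ha. exact Ha. }
  rewrite (inv_form hG psi g gi E). solve_grp hG.
Qed.

Theorem mainTheorem9 (G : group) (hG : nil_class_le2 G) :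
  @brace_block G _ (fun psi : {psi : G -> G | @is_endo G psi} => @circ G (proj1_sig psi)).
Proof.
  split.
  - intros [psi Hp]. simpl. apply circ_group; assumption.
  - intros [psi Hp] [phi Hf]. simpl. split; apply circ_skew; assumption.
Qed.
Print Assumptions mainTheorem9.
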